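(* Let $G$ be a finite simple graph with diameter $2$. Then $G$ is $\chi_\rho$-critical if and only if for each edge $e=u_1u_2 \in E(G)$ at least one of the following statements holds: (i) $\alpha(G-e)>\alpha(G)$; (ii) there exist indices $\{i,j\}=\{1,2\}$, a vertex $y \in N_G[u_i]$ with $d_{G-e}(y,u_j) \geq 3$, and a maximum independent set $A$ of $G$ (i.e., $|A|=\alpha(G)$) such that $A \cap \{y, u_j\}= \emptyset$.
   Context: $N_G[v]=N_G(v)\cup\{v\}$ is the closed neighborhood; $\alpha(G)$ is the independence number. A $k$-packing coloring of $G$ is a map $c:V(G)\to\{1,\ldots,k\}$ such that two distinct vertices $u,v$ with $c(u)=c(v)=i$ satisfy $d_G(u,v)>i$ (distance between vertices in different components is infinite); $\chi_\rho(G)$ is the smallest $k$ for which such a coloring exists. $G$ is $\chi_\rho$-critical if $\chi_\rho(H)<\chi_\rho(G)$ for every proper subgraph $H$ of $G$. $G-e$ is $G$ with edge $e$ deleted. *)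

(* Defs.v *)
From mathcomp Require Import all_boot.
Set Implicit Arguments. Unset Strict Implicit. Unset Printing Implicit Defensive.

(* A (sub)graph on the finite ambient type T is given by a vertex set
   V : {set T} and an adjacency relation E : rel T (only its restriction to
   V matters).  A finite simple graph G is a symmetric irreflexive
   relation E on T, with vertex set [set: T]. *)

Section Graphs.
Variable T : finType.

(* reach V E k u v : there is a walk of length at most k from u to v
   using only vertices of V, i.e. d_{(V,E)}(u,v) <= k. *)
Fixpoint reach (V : {set T}) (E : rel T) (k : nat) (u v : T) : bool :=
  match k with
  | 0 => (u == v) && (u \in V)
  | k'.+1 => reach V E k' u v ||
             [exists w, [&& reach V E k' u w, E w v & v \in V]]
  end.

Definition packing_coloring (V : {set T}) (E : rel T) (k : nat)
  (c : {ffun T -> 'I_k.+1}) : bool :=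
  [forall v in V, 0 < c v] &&
  [forall u in V, forall v in V,
     (u != v) && (c u == c v) ==> ~~ reach V E (c u) u v].

Definition packable (V : {set T}) (E : rel T) (k : nat) : bool :=
  [exists c : {ffun T -> 'I_k.+1}, packing_coloring V E c].

Lemma packable_exists (V : {set T}) (E : rel T) : exists k, packable V E k.
Proof.
exists #|T|; apply/existsP.
exists [ffun v => inord (enum_rank v).+1 : 'I_#|T|.+1].
apply/andP; split.
  by apply/forall_inP => v _; rewrite ffunE inordK // ltnS.
apply/forall_inP => u _; apply/forall_inP => v _; apply/implyP.
case/andP => uv /eqP; rewrite !ffunE => /(congr1 val).
rewrite /= !inordK ?ltnS // => -[] /val_inj Euv.
have := enum_rankK u; rewrite Euv enum_rankK => Evu.
by rewrite Evu eqxx in uv.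
Qed.

Definition chi_rho (V : {set T}) (E : rel T) : nat :=
  ex_minn (packable_exists V E).

Definition subgraph (E : rel T) (V' : {set T}) (E' : rel T) : Prop :=
  symmetric E' /\ (forall x y, E' x y -> [/\ x \in V', y \in V' & E x y]).

Definition proper_subgraph (E : rel T) (V' : {set T}) (E' : rel T) : Prop :=
  subgraph E V' E' /\ (V' != setT \/ exists x y, E x y /\ ~~ E' x y).

Definition chi_critical (E : rel T) : Prop :=
  forall V' E', proper_subgraph E V' E' -> chi_rho V' E' < chi_rho setT E.

Definition independent (V : {set T}) (E : rel T) (A : {set T}) : bool :=
  (A \subset V) && [forall x in A, forall y in A, ~~ E x y].

Definition alpha (V : {set T}) (E : rel T) : nat :=
  \max_(A : {set T} | independent V E A) #|A|.

Definition del_edge (E : rel T) (u1 u2 : T) : rel T :=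
  fun x y => E x y && ~~ (((x == u1) && (y == u2)) || ((x == u2) && (y == u1))).

Definition diameter2 (E : rel T) : Prop :=
  (forall u v, reach setT E 2 u v) /\ (exists u v, ~~ reach setT E 1 u v).

End Graphs.

(* Main.v *)
Require Import Defs.
From mathcomp Require Import all_boot.
From mathcomp Require Import zify.
Set Implicit Arguments. Unset Strict Implicit. Unset Printing Implicit Defensive.

Section Gen.
Variable T : finType.
Implicit Types (V : {set T}) (F : rel T).

Lemma reach_le V F k m u v : k <= m -> reach V F k u v -> reach V F m u v.
Proof.
elim: m => [|m IH]; first by rewrite leqn0 => /eqP ->.
rewrite leq_eqVlt => /orP[/eqP -> //|]; rewrite ltnS => km h.
by rewrite /= (IH km h).
Qed.

Lemma reach1E F u v : reach setT F 1 u v = (u == v) || F u v.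
Proof.
rewrite /=; apply/idP/idP.
  case/orP=> [/andP[->]//|/existsP[w /and3P[/andP[/eqP <- _] -> _]]]; by rewrite orbT.
case/orP=> [->|h]; first by rewrite in_setT.
apply/orP; right; apply/existsP; exists u; by rewrite eqxx h !in_setT.
Qed.

Lemma reach2E F u v :
  reach setT F 2 u v = [|| u == v, F u v | [exists w, F u w && F w v]].
Proof.
have -> : reach setT F 2 u v =
   reach setT F 1 u v || [exists w, [&& reach setT F 1 u w, F w v & v \in setT]] by [].
rewrite reach1E -orbA; apply/idP/idP.
  case/or3P=> [->//|->|/existsP[w]]; rewrite ?orbT //.
  rewrite reach1E => /and3P[h1 h2 _]; case/orP: h1 => [/eqP Euw|h1]; first by rewrite Euw h2 orbT.
  by apply/orP; right; apply/orP; right; apply/existsP; exists w; rewrite h1 h2.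
case/or3P=> [->//|->|/existsP[w /andP[h1 h2]]]; rewrite ?orbT //.
apply/orP; right; apply/orP; right; apply/existsP; exists w.
by rewrite reach1E h1 orbT h2 in_setT.
Qed.

Lemma reach_sub V V' F F' k u v : V' \subset V -> (forall x y, F' x y -> F x y) ->
  reach V' F' k u v -> reach V F k u v.
Proof.
move=> /subsetP sV sF; elim: k v => [|k IH] v /=.
  by case/andP=> -> /sV ->.
case/orP=> [/IH ->//|/existsP[w /and3P[h1 h2 h3]]].
apply/orP; right; apply/existsP; exists w; by rewrite IH // sF // sV.
Qed.

Lemma packable_sub V V' F F' k : V' \subset V -> (forall x y, F' x y -> F x y) ->
  packable V F k -> packable V' F' k.
Proof.
move=> sV sF /existsP[c /andP[/forall_inP h1 /forall_inP h2]].
apply/existsP; exists c; apply/andP; split.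
  by apply/forall_inP => v vV; apply: h1; apply: (subsetP sV).
apply/forall_inP => u uV; apply/forall_inP => v vV; apply/implyP => hh.
have := h2 u (subsetP sV _ uV) => /forall_inP /(_ v (subsetP sV _ vV)) /implyP /(_ hh).
by apply: contra; apply: reach_sub.
Qed.

Lemma packable_widen V F k m : k <= m -> packable V F k -> packable V F m.
Proof.
move=> km /existsP[c /andP[/forall_inP h1 /forall_inP h2]].
have km' : k.+1 <= m.+1 by [].
apply/existsP; exists [ffun v => widen_ord km' (c v)]; apply/andP; split.
  by apply/forall_inP => v vV; rewrite ffunE /=; apply: h1.
apply/forall_inP => u uV; apply/forall_inP => v vV; rewrite !ffunE /=.
have := h2 u uV => /forall_inP /(_ v vV) /implyP h.
apply/implyP => /andP[uv cuv]; apply: h; rewrite uv /=.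
by apply/eqP; apply/val_inj; apply/eqP.
Qed.

Lemma alpha_ge V F A : independent V F A -> #|A| <= alpha V F.
Proof. by move=> h; rewrite /alpha; apply: (leq_bigmax_cond (F := fun A : {set T} => #|A|)). Qed.

Lemma alpha_ex V F : exists2 A, independent V F A & #|A| = alpha V F.
Proof.
have h0 : independent V F set0.
  by rewrite /independent sub0set; apply/forall_inP => x; rewrite in_set0.
have : 0 < #|[pred A : {set T} | independent V F A]|.
  by apply/card_gt0P; exists set0.
move=> /(eq_bigmax_cond (fun A : {set T} => #|A|)) [A HA HM].
by exists A => //; rewrite /alpha HM.
Qed.

Lemma count_colors k (c : {ffun T -> 'I_k.+1}) (S : {set T}) :
  (forall v, v \in S -> 1 < c v) -> {in S &, injective c} -> #|S| <= k.-1.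
Proof.
move=> h1 hinj; rewrite -(card_in_imset hinj).
case: k c h1 hinj => [|k] c h1 hinj.
  rewrite leqn0 cards_eq0; apply/eqP/setP => i; rewrite in_set0.
  apply/negP => /imsetP[v vS _]; have := h1 v vS; by case: (c v) => -[].
have sub : [set c x | x in S] \subset ~: [set ord0; inord 1].
  apply/subsetP => i /imsetP[v vS ->]; rewrite in_setC !inE.
  apply/negP => /orP[/eqP e|/eqP e]; move: (h1 v vS); by rewrite e // inordK.
have := subset_leq_card sub; rewrite [#|~: _|]cardsCs setCK cards2.
have -> : (ord0 != inord 1 :> 'I_k.+2) by apply/eqP => /(congr1 val); rewrite /= inordK.
by rewrite card_ord subSS subn1.
Qed.

Lemma build F (A : {set T}) (s : seq T) (f : T -> T) :
  (forall x y, x \in A -> y \in A -> x != y -> ~~ F x y) -> uniq s ->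
  (forall v, v \notin A -> f v \in s) ->
  (forall u v, u \notin A -> v \notin A -> u != v -> f u = f v ->
      ~~ reach setT F (index (f u) s).+2 u v) ->
  packable setT F (size s).+1.
Proof.
move=> indA us fs hf.
apply/existsP; exists [ffun v => if v \in A then inord 1 else inord (index (f v) s).+2].
apply/andP; split.
  apply/forall_inP => v _; rewrite ffunE; case: ifP => vA; rewrite inordK //.
  by rewrite !ltnS index_mem fs // vA.
apply/forall_inP => u _; apply/forall_inP => v _; apply/implyP => /andP[uv].
rewrite !ffunE; case: ifP => uA; case: ifP => vA.
- by move=> _; rewrite inordK // reach1E negb_or uv indA.
- move/eqP/(congr1 val); rewrite /= !inordK ?ltnS ?index_mem ?fs ?vA //.
- move/eqP/(congr1 val); rewrite /= !inordK ?ltnS ?index_mem ?fs ?uA //.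
- move/eqP/(congr1 val); rewrite /= !inordK ?ltnS ?index_mem ?fs ?uA ?vA //.
  case=> ei; rewrite ?inordK ?ltnS ?index_mem ?fs ?uA //.
  apply: hf => //; rewrite ?uA ?vA //.
  by rewrite -(nth_index u (fs u (negbT uA))) ei nth_index // fs ?vA.
Qed.

End Gen.

Section Main.
Variable T : finType.
Variable E : rel T.
Hypothesis Esym : symmetric E.
Hypothesis Eirr : irreflexive E.
Hypothesis Hdiam : diameter2 E.

Local Notation n := #|T|.
Local Notation al := (alpha setT E).

Lemma al_le : al <= n.
Proof. by have [A _ <-] := alpha_ex setT E; apply: max_card. Qed.

Lemma indep_pair (V : {set T}) (F : rel T) (A : {set T}) : independent V F A -> forall x y, x \in A -> y \in A -> x != y -> ~~ F x y.
Proof. by case/andP=> _ /forall_inP h x y xA yA _; have /forall_inP := h x xA; apply. Qed.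

Lemma G_upper : packable setT E (n - al).+1.
Proof.
have [A HA eA] := alpha_ex setT E.
have := build (F := E) (s := enum (~: A)) (f := id) (indep_pair HA) (enum_uniq _) _ _.
rewrite -cardE [#|~: A|]cardsCs setCK eA; apply.
  by move=> v vA; rewrite mem_enum in_setC.
by move=> u v _ _ /eqP.
Qed.

Lemma G_lower k : packable setT E k -> (n - al).+1 <= k.
Proof.
case/existsP=> c /andP[/forall_inP cpos /forall_inP cpack].
set C1 := [set v | val (c v) == 1].
have indC1 : independent setT E C1.
  rewrite /independent subsetT /=; apply/forall_inP => x xC; apply/forall_inP => y yC.
  case: (eqVneq x y) => [->|xy]; first by rewrite Eirr.
  have := cpack x (in_setT x) => /forall_inP /(_ y (in_setT y)) /implyP.
  move: xC yC; rewrite !inE => /eqP cx /eqP cy.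
  have -> : c x == c y by apply/eqP/val_inj; rewrite /= cx cy.
  by rewrite xy cx reach1E negb_or xy => /(_ isT).
have c1 := alpha_ge indC1.
have gt1 : forall v, v \in ~: C1 -> 1 < c v.
  move=> v; rewrite !inE => h; have := cpos v (in_setT v).
  by case: (c v) h => -[|[|m]].
have inj : {in ~: C1 &, injective c}.
  move=> x y xC yC cxy; apply/eqP; apply/negPn/negP => xy.
  have := cpack x (in_setT x) => /forall_inP /(_ y (in_setT y)) /implyP.
  rewrite xy cxy eqxx => /(_ isT); apply/negP/negPn.
  by apply: (reach_le _ (Hdiam.1 x y)); rewrite -cxy; apply: gt1.
have := count_colors gt1 inj.
have := cardsC C1.
have [u _] : exists u : T, true by case: Hdiam => _ [u _]; exists u.
have := cpos u (in_setT u); have := ltn_ord (c u).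
move: al_le c1; clearbody C1; move: (c u) => cu; move: #|C1| #|~: C1| #|T| (alpha _ _) => a b n0 al0. lia.
Qed.


Lemma nbr_ex v : exists u, E v u.
Proof.
case: Hdiam => hd [p [q]]; rewrite reach1E negb_or => /andP[pq _].
have [w vw] : exists w, v != w.
  case: (eqVneq v p) => [->|vp]; [by exists q | by exists p].
have := hd v w; rewrite reach2E (negbTE vw) /= => /orP[h|/existsP[m /andP[h _]]].
  by exists w. by exists m.
Qed.

Section Edge.
Variables u1 u2 : T.
Hypothesis He : E u1 u2.
Local Notation F := (del_edge E u1 u2).
Local Notation inU w := ((w == u1) || (w == u2)).

Lemma u12 : u1 != u2.
Proof. by apply/eqP => e; move: He; rewrite e Eirr. Qed.

Lemma F_E x y : F x y -> E x y.
Proof. by case/andP. Qed.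

Lemma del_outl x y : ~~ inU x -> E x y -> F x y.
Proof. by rewrite negb_or => /andP[/negbTE h1 /negbTE h2] h; rewrite /del_edge h h1 h2. Qed.

Lemma del_outr x y : ~~ inU y -> E x y -> F x y.
Proof. by rewrite negb_or => /andP[/negbTE h1 /negbTE h2] h; rewrite /del_edge h h1 h2 !andbF. Qed.

Lemma Fsym : symmetric F.
Proof.
move=> x y; rewrite /del_edge Esym.
by case: (x == u1); case: (x == u2); case: (y == u1); case: (y == u2).
Qed.

Lemma reach2_sym x y : reach setT F 2 x y = reach setT F 2 y x.
Proof.
rewrite !reach2E eq_sym (Fsym x y); congr (_ || (_ || _)).
apply/existsP/existsP => -[w /andP[h1 h2]]; exists w.
  by rewrite (Fsym y w) h2 (Fsym w x) h1.
by rewrite (Fsym x w) h2 (Fsym w y) h1.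
Qed.

Lemma Wout a b : ~~ inU a -> ~~ inU b -> reach setT F 2 a b.
Proof.
move=> ha hb; have := Hdiam.1 a b; rewrite !reach2E.
case/or3P=> [->//|h|/existsP[w /andP[h1 h2]]].
  by rewrite del_outl ?orbT.
by apply/orP; right; apply/orP; right; apply/existsP; exists w; rewrite del_outl // del_outr.
Qed.

Lemma nE w p : ~~ inU w -> ~~ reach setT F 2 w p -> ~~ E p w.
Proof.
move=> hw; apply: contra => h; rewrite reach2E; apply/orP; right; apply/orP; left.
by apply: del_outl; rewrite // Esym.
Qed.

Lemma Kp w p : ~~ inU w -> ~~ reach setT F 2 w p ->
  (p == u1) && E u2 w || (p == u2) && E u1 w.
Proof.
move=> hw hr; have := Hdiam.1 w p; rewrite reach2E.
case/or3P=> [wp|h|/existsP[m /andP[h1 h2]]].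
- by move: hr; rewrite reach2E wp.
- by move: hr; rewrite reach2E (del_outl hw h) orbT.
have f1 := del_outl hw h1.
case: (boolP (F m p)) => f2.
  by move: hr; rewrite reach2E; case/norP=> _ /norP[_ /existsPn /(_ m)]; rewrite f1 f2.
move: f2; rewrite /del_edge h2 /= negbK => /orP[] /andP[/eqP em /eqP ep]; subst m p.
  by rewrite eqxx (Esym u1 w) h1 orbT.
by rewrite eqxx (Esym u2 w) h1.
Qed.

Lemma inU_of w p : ~~ inU w -> ~~ reach setT F 2 w p -> inU p.
Proof. by move=> hw /(Kp hw) /orP[] /andP[-> _]; rewrite ?orbT. Qed.

Lemma F2core w p q : ~~ inU w -> p != q ->
  ~~ reach setT F 2 w p -> ~~ reach setT F 2 w q -> False.
Proof.
move=> hw pq hp hq; have np := nE hw hp; have nq := nE hw hq.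
move: (Kp hw hp) (Kp hw hq).
case/orP=> /andP[/eqP ep h]; case/orP=> /andP[/eqP eq h']; subst p q.
- by rewrite eqxx in pq.
- by move: nq; rewrite h.
- by move: nq; rewrite h.
- by rewrite eqxx in pq.
Qed.

Lemma notU3 p q w : inU p -> inU q -> p != q -> w != p -> w != q -> ~~ inU w.
Proof.
move=> hp hq pq wp wq; apply/negP => hw.
move: hp hq hw pq wp wq.
by do 3 (case/orP=> /eqP ->); rewrite ?eqxx.
Qed.

Lemma F2 x z v : x != z -> x != v -> z != v ->
  ~~ reach setT F 2 x z -> ~~ reach setT F 2 x v ->
  ~~ reach setT F 2 z x -> ~~ reach setT F 2 z v ->
  ~~ reach setT F 2 v x -> ~~ reach setT F 2 v z -> False.
Proof.
move=> xz xv zv r1 r2 r3 r4 r5 r6.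
case: (boolP (inU x)) => hx; last exact: (F2core hx zv r1 r2).
case: (boolP (inU z)) => hz; last by apply: (F2core hz _ r3 r4); rewrite xv.
have hv : ~~ inU v by apply: (notU3 hx hz); rewrite // eq_sym.
exact: (F2core hv xz r5 r6).
Qed.

Lemma F3core a p b q : ~~ inU a -> inU p -> ~~ inU b -> inU q -> p != q ->
  ~~ reach setT F 2 a p -> ~~ reach setT F 3 b q -> False.
Proof.
move=> ha hp hb hq pq rap rbq.
have Eqa : E q a.
  move: (Kp ha rap) hq pq => /orP[] /andP[/eqP -> h] /orP[] /eqP -> //; rewrite eqxx //.
have rba := Wout hb ha.
move/negP: rbq; apply.
have -> : reach setT F 3 b q =
  reach setT F 2 b q || [exists w, [&& reach setT F 2 b w, F w q & q \in setT]] by [].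
apply/orP; right.
apply/existsP; exists a; rewrite rba in_setT andbT; apply: del_outl => //.
by rewrite Esym.
Qed.

Lemma F3 x z u v : x != z -> x != u -> x != v -> z != u -> z != v -> u != v ->
  ~~ reach setT F 2 x z -> ~~ reach setT F 2 z x ->
  ~~ reach setT F 3 u v -> ~~ reach setT F 3 v u -> False.
Proof.
move=> xz xu xv zu zv uv r1 r2 r3 r4.
have r3' : ~~ reach setT F 2 u v by apply: contra r3; apply: reach_le.
have r4' : ~~ reach setT F 2 v u by apply: contra r4; apply: reach_le.
have one : forall p q, p != q -> ~~ reach setT F 2 p q -> ~~ reach setT F 2 q p ->
    [|| (~~ inU p && inU q), (inU p && ~~ inU q) | (inU p && inU q)].
  move=> p q _ h1 h2; case: (boolP (inU p)) => hp; case: (boolP (inU q)) => hq //.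
  by have := inU_of hp h1; rewrite (negbTE hq).
have notboth : forall p q r s, p != q -> r != p -> r != q -> s != p -> s != q -> r != s ->
    inU p -> inU q -> ~~ reach setT F 2 r s -> ~~ reach setT F 2 s r -> False.
  move=> p q r s pq rp rq sp sq rs hp hq h1 h2.
  have hr := notU3 hp hq pq rp rq.
  have := inU_of hr h1; by rewrite (negbTE (notU3 hp hq pq sp sq)).
move: (one _ _ xz r1 r2) (one _ _ uv r3' r4').
case/or3P=> /andP[h1 h2]; case/or3P=> /andP[h3 h4].
- exact: (F3core h1 h2 h3 h4 zv r1 r3).
- exact: (F3core h1 h2 h4 h3 zu r1 r4).
- exact: (notboth u v x z uv xu xv zu zv xz h3 h4 r1 r2).
- exact: (F3core h2 h1 h3 h4 xv r2 r3).
- exact: (F3core h2 h1 h4 h3 xu r2 r4).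
- exact: (notboth u v x z uv xu xv zu zv xz h3 h4 r1 r2).
- by apply: (notboth x z u v xz _ _ _ _ uv h1 h2 r3' r4'); rewrite eq_sym.
- by apply: (notboth x z u v xz _ _ _ _ uv h1 h2 r3' r4'); rewrite eq_sym.
- by apply: (notboth x z u v xz _ _ _ _ uv h1 h2 r3' r4'); rewrite eq_sym.
Qed.


Lemma pair_ii x z : x != z -> ~~ reach setT F 2 x z -> ~~ reach setT F 2 z x ->
  exists ui uj, ((ui, uj) = (u1, u2) \/ (ui, uj) = (u2, u1)) /\
  exists y, ((y == ui) || E ui y) /\ ~~ reach setT F 2 y uj /\
            ((y == x) && (uj == z) || (y == z) && (uj == x)).
Proof.
move=> xz r1 r2.
case: (boolP (inU x)) => hx; last first.
  case/orP: (Kp hx r1) => /andP[/eqP ez h]; subst z.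
    by exists u2, u1; split; [right | exists x; rewrite h orbT r1 !eqxx].
  by exists u1, u2; split; [left | exists x; rewrite h orbT r1 !eqxx].
case: (boolP (inU z)) => hz; last first.
  case/orP: (Kp hz r2) => /andP[/eqP ex h]; subst x.
    by exists u2, u1; split; [right | exists z; rewrite h orbT r2 !eqxx orbT].
  by exists u1, u2; split; [left | exists z; rewrite h orbT r2 !eqxx orbT].
move: hx hz xz r1 r2; case/orP=> /eqP ->; case/orP=> /eqP ->; rewrite ?eqxx // => _ r1 r2.
  by exists u1, u2; split; [left | exists u1; rewrite r1 !eqxx].
by exists u2, u1; split; [right | exists u2; rewrite r1 !eqxx].
Qed.

Definition concl_ii :=
  exists (ui uj : T),
    ((ui, uj) = (u1, u2) \/ (ui, uj) = (u2, u1)) /\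
    exists y : T,
      ((y == ui) || E ui y) /\
      ~~ reach setT F 2 y uj /\
      exists A : {set T},
        independent setT E A /\ #|A| = alpha setT E /\
        y \notin A /\ uj \notin A.

Lemma edge_fwd k : packable setT F k -> k <= n - al -> alpha setT F <= al -> concl_ii.
Proof.
move=> /existsP[c /andP[/forall_inP cpos /forall_inP cpack]] kle aF.
set C1 := [set v | val (c v) == 1].
have cp : forall x z, x != z -> c x = c z -> ~~ reach setT F (c x) x z.
  move=> x z xz cxz; have := cpack x (in_setT x) => /forall_inP /(_ z (in_setT z)) /implyP.
  by rewrite xz cxz eqxx; apply.
have nr : forall x z, x != z -> c x = c z -> 1 < c x -> ~~ reach setT F 2 x z.
  by move=> x z xz cxz h; apply: contra (cp x z xz cxz); apply: reach_le.
have nr3 : forall x z, x != z -> c x = c z -> 2 < c x -> ~~ reach setT F 3 x z.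
  by move=> x z xz cxz h; apply: contra (cp x z xz cxz); apply: reach_le.
have gt1 : forall v, v \in ~: C1 -> 1 < c v.
  move=> v; rewrite !inE => h; have := cpos v (in_setT v).
  by case: (c v) h => -[|[|m]].
have indC1 : independent setT F C1.
  rewrite /independent subsetT /=; apply/forall_inP => x xC; apply/forall_inP => y yC.
  case: (eqVneq x y) => [->|xy]; first by rewrite /del_edge Eirr.
  move: xC yC; rewrite !inE => /eqP cx /eqP cy.
  have := cp x y xy; rewrite cx reach1E negb_or xy => h.
  by apply: h; apply/val_inj; rewrite /= cx cy.
have c1 := alpha_ge indC1.
have kpos : 0 < k by have := cpos u1 (in_setT u1); have := ltn_ord (c u1); move: (nat_of_ord (c u1)) => m; lia.
have [x [z /and4P[xC zC xz /eqP cxz]]] :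
    exists x z, [&& x \in ~: C1, z \in ~: C1, x != z & c x == c z].
  case: (boolP [exists x, exists z, [&& x \in ~: C1, z \in ~: C1, x != z & c x == c z]]).
    by case/existsP=> x /existsP[z h]; exists x, z.
  move=> /existsPn hn; exfalso.
  have inj : {in ~: C1 &, injective c}.
    move=> x y xC yC cxy; apply/eqP; apply/negPn/negP => xy.
    by have := hn x => /existsPn /(_ y); rewrite xC yC xy cxy eqxx.
  have := count_colors gt1 inj; have := cardsC C1; move: al_le c1 aF kle kpos.
  clearbody C1; move: #|C1| #|~: C1| #|T| (alpha _ E) (alpha _ F) => a b n0 al0 alF. lia.
have gx := gt1 x xC; have gz := gt1 z zC.
have rxz := nr x z xz cxz gx.
have rzx : ~~ reach setT F 2 z x by apply: nr; rewrite 1?eq_sym // -cxz.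
set S := ~: C1 :\ z.
have gS : forall v, v \in S -> 1 < c v by move=> v; rewrite inE => /andP[_ /gt1].
have injS : {in S &, injective c}.
  move=> u v; rewrite !inE => /andP[uz uC] /andP[vz vC] cuv.
  apply/eqP; apply/negPn/negP => uv.
  have gu : 1 < c u by apply: gt1; rewrite !inE.
  have gv : 1 < c v by rewrite -cuv.
  have nrr : forall p q, p != q -> c p = c q -> 1 < c p -> ~~ reach setT F 2 p q := nr.
  have zv : z != v by rewrite eq_sym.
  have zu : z != u by rewrite eq_sym.
  have vu : v != u by rewrite eq_sym.
  case: (eqVneq x u) => [exu|xu].
    subst u.
    have e1 : c z = c v by rewrite -cxz.
    have e2 : c v = c x by rewrite cuv.
    have e3 : c v = c z by rewrite -cxz.
    exact: (F2 xz uv zv rxz (nr _ _ uv cuv gu) rzx (nr _ _ zv e1 gz) (nr _ _ vu e2 gv) (nr _ _ vz e3 gv)).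
  case: (eqVneq x v) => [exv|xv].
    subst v.
    have xu' : x != u by rewrite eq_sym.
    have e1 : c x = c u by rewrite cuv.
    have e2 : c z = c u by rewrite -cxz.
    have e3 : c u = c z by rewrite -cxz.
    exact: (F2 xz xu' zu rxz (nr _ _ xu' e1 gx) rzx (nr _ _ zu e2 gz) (nr _ _ uv cuv gu) (nr _ _ uz e3 gu)).
  have ux : u != x by rewrite eq_sym.
  have zx : z != x by rewrite eq_sym.
  case: (eqVneq (c u) (c x)) => [cux|cux].
    have e1 : c x = c u by rewrite cux.
    have e2 : c z = c u by rewrite -cxz.
    have e3 : c u = c z by rewrite -cxz.
    exact: (F2 xz xu zu rxz (nr _ _ xu e1 gx) rzx (nr _ _ zu e2 gz) (nr _ _ ux cux gu) (nr _ _ uz e3 gu)).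
  have ne : nat_of_ord (c u) != nat_of_ord (c x) by apply: contra cux => /eqP e; apply/eqP/val_inj.
  have : (2 < c u) || (2 < c x).
    move: gu gx ne; move: (nat_of_ord (c u)) (nat_of_ord (c x)) => a b ha hb; rewrite neq_ltn => /orP[h|h].
      by rewrite (leq_trans _ h) ?orbT.
    by rewrite (leq_trans _ h).
  have vx : v != x by rewrite eq_sym.
  case/orP=> h.
    have h' : 2 < c v by rewrite -cuv.
    exact: (F3 xz xu xv zu zv uv rxz rzx (nr3 _ _ uv cuv h) (nr3 _ _ vu (esym cuv) h')).
  have h' : 2 < c z by rewrite -cxz.
  exact: (F3 uv ux uz vx vz xz (nr _ _ uv cuv gu) (nr _ _ vu (esym cuv) gv)
            (nr3 _ _ xz cxz h) (nr3 _ _ zx (esym cxz) h')).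
have cS := count_colors gS injS.
have cD := cardsD1 z (~: C1); rewrite zC -/S in cD; simpl in cD.
have geA : al <= #|C1|.
  have := cardsC C1; move: al_le c1 aF kle kpos cS cD.
  clearbody C1 S; move: #|C1| #|~: C1| #|S| #|T| (alpha _ E) (alpha _ F) => a b sS n0 al0 alF. lia.
have UxUz : inU x || inU z.
  case: (boolP (inU x)) => // hx; exact: (inU_of hx rxz).
have indE : independent setT E C1.
  rewrite /independent subsetT /=; apply/forall_inP => a aC; apply/forall_inP => b bC.
  have := indep_pair indC1 aC bC.
  case: (eqVneq a b) => [->|ab]; first by rewrite Eirr.
  move=> /(_ isT); rewrite /del_edge negb_and negbK => /orP[//|hab].
  exfalso; case/orP: hab => /andP[/eqP ea /eqP eb]; subst a b;
    case/orP: UxUz => /orP[] /eqP e; subst;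
    by move: xC zC; rewrite !in_setC ?aC ?bC.
have eA : #|C1| = al by apply/eqP; rewrite eqn_leq geA alpha_ge.
have [ui [uj [hu [y [hy [hr /orP hyx]]]]]] := pair_ii xz rxz rzx.
exists ui, uj; split => //; exists y; split => //; split => //.
exists C1; split => //; split => //.
move: xC zC; rewrite !in_setC.
by case: hyx => /andP[/eqP -> /eqP ->] -> ->.
Qed.

Lemma edge_bwd : al < alpha setT F \/ concl_ii -> packable setT F (n - al).
Proof.
case=> [hi|[ui [uj [hu [y [hy [hr [A [indA [eA [yA ujA]]]]]]]]]]].
  have [A indA eA] := alpha_ex setT F.
  have := build (F := F) (s := enum (~: A)) (f := id) (indep_pair indA) (enum_uniq _) _ _.
  rewrite -cardE [#|~: A|]cardsCs setCK eA => h.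
  apply: (packable_widen _ (h _ _)).
  - have := max_card A; rewrite eA; move: al_le hi.
    move: (alpha _ E) (alpha _ F) #|T| => a b m; lia.
  - by move=> v vA; rewrite mem_enum in_setC.
  - by move=> u v _ _ /eqP.
have yuj : y != uj by apply: contra hr => /eqP ->; rewrite reach2E eqxx.
set s := y :: enum (~: A :\ y :\ uj).
have indAF : forall x z, x \in A -> z \in A -> x != z -> ~~ F x z.
  move=> x z xA zA xz; apply: contra (indep_pair indA xA zA xz); exact: F_E.
have us : uniq s by rewrite /s /= enum_uniq mem_enum !inE eqxx /= andbF.
have fs : forall v, v \notin A -> (if v == uj then y else v) \in s.
  move=> v vA; case: ifP => vuj; first by rewrite mem_head.
  case: (eqVneq v y) => [->|vy]; first by rewrite mem_head.
  by rewrite /s in_cons mem_enum !inE vuj vy vA orbT.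
have := build (F := F) indAF us fs.
have sz : size s = #|~: A| - 1.
  rewrite /s /= -cardE.
  have c1 := cardsD1 y (~: A); rewrite in_setC yA in c1.
  have c2 := cardsD1 uj (~: A :\ y); rewrite !inE eq_sym yuj ujA in c2.
  rewrite c1 c2 /=; lia.
have cA : #|~: A| = n - al by rewrite [#|~: A|]cardsCs setCK eA.
have yinA : 0 < #|~: A| by apply/card_gt0P; exists y; rewrite in_setC.
move=> h; apply: (packable_widen _ (h _)); first by rewrite sz -cA; lia.
have i0 : index y s = 0 by rewrite /s /= eqxx.
move=> u v uA vA uv; case: (boolP (u == uj)) => uuj; case: (boolP (v == uj)) => vuj.
- by move: uv; rewrite (eqP uuj) (eqP vuj) eqxx.
- move=> e; subst v.
  by rewrite i0 (eqP uuj) reach2_sym.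
- move=> e; subst u.
  by rewrite i0 (eqP vuj).
- by move=> e; rewrite e eqxx in uv.
Qed.

End Edge.

Lemma main_iff : chi_critical E <->
  (forall u1 u2 : T, E u1 u2 ->
     alpha setT (del_edge E u1 u2) > alpha setT E \/ concl_ii u1 u2).
Proof.
split.
- move=> crit u1 u2 He.
  case: (ltnP al (alpha setT (del_edge E u1 u2))) => h; [by left | right].
  have sub : proper_subgraph E setT (del_edge E u1 u2).
    split; first split.
    + exact: Fsym.
    + by move=> x y h'; rewrite !in_setT (F_E h').
    + by right; exists u1, u2; split => //; rewrite /del_edge !eqxx /= andbF.
  have hlt := crit _ _ sub.
  have hG : chi_rho setT E <= (n - al).+1.
    by rewrite /chi_rho; case: ex_minnP => m _; apply; exact: G_upper.
  have PF : packable setT (del_edge E u1 u2) (chi_rho setT (del_edge E u1 u2)).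
    by rewrite /chi_rho; case: ex_minnP.
  apply: (edge_fwd He PF _ h).
  move: hlt hG; move: (chi_rho _ _) (chi_rho _ _) => a b; lia.
- move=> H V' E' [[symE' subE'] prop].
  have hG : (n - al).+1 <= chi_rho setT E.
    by rewrite /chi_rho; case: ex_minnP => m Pm _; exact: G_lower Pm.
  suff PH : packable V' E' (n - al).
    have hH : chi_rho V' E' <= n - al by rewrite /chi_rho; case: ex_minnP => m _; apply.
    exact: leq_ltn_trans hH hG.
  case: prop => [hV | [x [y [Exy nE']]]].
  + have [v vV] : exists v, v \notin V'.
      move: hV; rewrite eqEsubset subsetT /= => /subsetPn [v _ vV]; by exists v.
    have [u Evu] := nbr_ex v.
    apply: (packable_sub (subsetT V') _ (edge_bwd Evu (H v u Evu))).
    move=> a b hab; have [aV bV Eab] := subE' a b hab; rewrite /del_edge Eab /=.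
    have av : a != v by apply/eqP => e; subst; rewrite aV in vV.
    have bv : b != v by apply/eqP => e; subst; rewrite bV in vV.
    by rewrite (negbTE av) (negbTE bv) andbF.
  + apply: (packable_sub (subsetT V') _ (edge_bwd Exy (H x y Exy))).
    move=> a b hab; have [_ _ Eab] := subE' a b hab; rewrite /del_edge Eab /=.
    apply/negP => /orP[] /andP[/eqP ea /eqP eb]; subst.
      by rewrite hab in nE'.
    by rewrite symE' hab in nE'.
Qed.

End Main.

Unset Implicit Arguments.

Theorem theorem4p1 (T : finType) (E : rel T)
  (Esym : symmetric E) (Eirr : irreflexive E) (Hdiam : diameter2 E) :
  chi_critical E <->
  (forall u1 u2 : T, E u1 u2 ->
     alpha setT (del_edge E u1 u2) > alpha setT E
     \/ exists (ui uj : T),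
          ((ui, uj) = (u1, u2) \/ (ui, uj) = (u2, u1)) /\
          exists y : T,
            ((y == ui) || E ui y) /\
            ~~ reach setT (del_edge E u1 u2) 2 y uj /\
            exists A : {set T},
              independent setT E A /\ #|A| = alpha setT E /\
              y \notin A /\ uj \notin A).
exact: (main_iff Esym Eirr Hdiam).
Qed.
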